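(* For every integer $m\geqslant 1$, the first order binary Reed–Muller code $\mathcal R(1,m)$ is log-concave.
   Context: The binary Reed–Muller code $\mathcal R(1,m)$ is the binary linear code of length $2^m$ consisting of the evaluation vectors $(f(x))_{x\in\mathbb{F}_2^m}$ of all polynomials $f\in\mathbb{F}_2[x_1,\dots,x_m]$ of degree at most $1$. For a linear code of length $n$, $A_i$ is the number of codewords of weight $i$; the nonzero weight distribution is the subsequence $a_0,\dots,a_N$ of $A_0,\dots,A_n$ of its nonzero values, in order; the code is log-concave if $a_i^2\geqslant a_{i-1}a_{i+1}$ for all $1\leqslant i\leqslant N-1$. *)

(* Defs.v *)
From mathcomp Require Import all_boot all_order all_algebra.
Set Implicit Arguments. Unset Strict Implicit. Unset Printing Implicit Defensive.
Import GRing.Theory.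
Local Open Scope ring_scope.

(* F_2^m is modelled as 'rV['F_2]_m; a binary word of length 2^m indexed by
   the points of F_2^m is a finite function {ffun 'rV['F_2]_m -> 'F_2}. *)

(* Evaluation vector of the polynomial f(x) = c + sum_i a_i x_i
   (a general polynomial of degree <= 1 over F_2 in x_1..x_m). *)
Definition affine_eval (m : nat) (a : 'rV['F_2]_m) (c : 'F_2)
  : {ffun 'rV['F_2]_m -> 'F_2} :=
  [ffun x : 'rV['F_2]_m => c + \sum_(i < m) a ord0 i * x ord0 i].

Definition RM1 (m : nat) : {set {ffun 'rV['F_2]_m -> 'F_2}} :=
  [set v | [exists a : 'rV['F_2]_m, exists c : 'F_2, v == affine_eval a c]].

Definition wt (I : finType) (v : {ffun I -> 'F_2}) : nat := #|[set x | v x != 0]|.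

Definition A_coeff (I : finType) (C : {set {ffun I -> 'F_2}}) (i : nat) : nat :=
  #|[set v in C | wt v == i]|.

Definition nz_weight_distribution (I : finType) (C : {set {ffun I -> 'F_2}})
  : seq nat :=
  [seq a <- [seq A_coeff C i | i <- iota 0 #|I|.+1] | a != 0%N].

Definition log_concave (I : finType) (C : {set {ffun I -> 'F_2}}) : Prop :=
  let s := nz_weight_distribution C in
  forall i : nat, (1 <= i)%N -> (i <= (size s).-1 - 1)%N ->
    (nth 0%N s i.-1 * nth 0%N s i.+1 <= (nth 0%N s i) ^ 2)%N.

(* Main.v *)
Require Import Defs.
From mathcomp Require Import all_boot all_order all_algebra.
Set Implicit Arguments. Unset Strict Implicit. Unset Printing Implicit Defensive.
Import GRing.Theory.
Local Open Scope ring_scope.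

Lemma F2_cases (y : 'F_2) : y = 0%R \/ y = 1%R.
Proof. by case: y => [[|[|k]] //] ?; [left|right]; apply/val_inj. Qed.

Lemma filter3 (f : nat -> nat) h n : (0 < h < n)%N ->
  (forall i, i \notin [:: 0%N; h; n] -> f i = 0%N) ->
  f 0%N != 0%N -> f h != 0%N -> f n != 0%N ->
  [seq a <- [seq f i | i <- iota 0 n.+1] | a != 0%N] = [:: f 0%N; f h; f n].
Proof.
move=> /andP[h0 hn] Hz f0 fh fn.
rewrite filter_map.
suff -> : [seq i <- iota 0 n.+1 | f i != 0%N] = [:: 0%N; h; n] by [].
apply: (@irr_sorted_eq _ ltn).
- exact: ltn_trans.
- exact: ltnn.
- exact: sorted_filter (@ltn_trans) _ _ (iota_ltn_sorted _ _).
- by rewrite /= h0 hn.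
move=> i; rewrite mem_filter mem_iota add0n.
case: (boolP (i \in [:: 0%N; h; n])) => Hi.
  move: (Hi); rewrite !inE => /or3P[]/eqP->. all: rewrite ?f0 ?fh ?fn /= //.
  - by rewrite ltnS ltnW.
  - exact: ltnSn.
by rewrite (Hz i Hi).
Qed.

Section S.
Variable m : nat.
Local Notation I := ('rV['F_2]_m).

Lemma wt0 (v : {ffun I -> 'F_2}) : wt v = 0%N -> v = 0%R.
Proof.
move/eqP; rewrite /wt cards_eq0 => /eqP H; apply/ffunP => x; rewrite ffunE.
apply/eqP; apply: contraT => Hx.
by move: (in_set0 x); rewrite -H inE Hx.
Qed.

Lemma wtT (v : {ffun I -> 'F_2}) : wt v = #|I| -> v = [ffun=> 1%R].
Proof.
move=> H; apply/ffunP => x; rewrite ffunE.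
have : [set x | v x != 0%R] = setT. apply/eqP. rewrite eqEcard subsetT cardsT. by rewrite /= -H.
move/setP/(_ x); rewrite !inE => Hx.
by case: (F2_cases (v x)) => // E; rewrite E eqxx in Hx.
Qed.

Lemma wt_const (c : 'F_2) : affine_eval (0 : I) c = [ffun=> c].
Proof.
apply/ffunP => x; rewrite !ffunE big1 ?addr0 // => i _.
by rewrite mxE mul0r.
Qed.

Lemma wt_bal (a : I) c : a != 0%R -> (wt (affine_eval a c) * 2 = #|I|)%N.
Proof.
move=> Ha.
have [j Hj] : exists j, a ord0 j != 0%R.
  apply/existsP; apply: contraT; rewrite negb_exists => /forallP H.
  case/negP: Ha; apply/eqP/matrixP => i k; rewrite mxE (ord1 i); exact/eqP/negbNE/H.
have aj : a ord0 j = 1%R by case: (F2_cases (a ord0 j)) => // E; rewrite E eqxx in Hj.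
pose e : I := \row_(i < m) (if i == j then 1%R else 0%R).
pose f := affine_eval a c.
have fe x : f (x + e) = (f x + 1)%R.
  rewrite /f !ffunE.
  under eq_bigr => i _ do rewrite mxE mulrDr.
  rewrite big_split /= addrA; congr (_ + _)%R.
  rewrite (bigD1 j) //= big1 ?addr0; first by rewrite mxE eqxx aj mulr1.
  by move=> i /negbTE Hi; rewrite mxE Hi mulr0.
have ee : e + e = 0.
  by apply/matrixP => i k; rewrite !mxE; case: ifP => _; [apply/eqP|rewrite addr0].
set S := [set x | f x != 0%R].
have HS : S = [set x + e | x in ~: S].
  apply/setP => y; rewrite inE; apply/idP/imsetP.
    move=> Hy; exists (y + e).
      rewrite !inE negbK fe; case: (F2_cases (f y)) Hy => ->; rewrite ?eqxx //.
    by rewrite -addrA ee addr0.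
  move=> [x]; rewrite !inE negbK => /eqP Hx ->; by rewrite fe Hx add0r.
have : #|S| = #|~: S|.
  rewrite {1}HS card_imset //; exact: addIr.
rewrite /wt -/f -/S => E.
by rewrite muln2 -addnn {2}E cardsC.
Qed.

Lemma wt_c0 : wt ([ffun=> 0] : {ffun I -> 'F_2}) = 0%N.
Proof. by apply/eqP; rewrite cards_eq0; apply/eqP/setP => x; rewrite !inE ffunE eqxx. Qed.

Lemma wt_c1 : wt ([ffun=> 1] : {ffun I -> 'F_2}) = #|I|.
Proof.
rewrite /wt; have -> : [set x | ([ffun=> 1] : {ffun I -> 'F_2}) x != 0] = setT.
  by apply/setP => x; rewrite !inE ffunE.
exact: cardsT.
Qed.

Lemma inRM a c : affine_eval a c \in RM1 m.
Proof. by rewrite inE; apply/existsP; exists a; apply/existsP; exists c. Qed.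
End S.

Theorem mainTheorem12 (m : nat) : (1 <= m)%N -> log_concave (RM1 m).
Proof.
move=> m1.
set C := RM1 m.
pose a1 : 'rV['F_2]_m := const_mx 1.
have a1n : a1 != 0.
  by apply/eqP => /matrixP/(_ ord0 (Ordinal m1)); rewrite !mxE => /eqP.
set n := #|'rV['F_2]_m|.
set h := wt (affine_eval a1 0).
have hE : (h * 2 = n)%N := wt_bal 0 a1n.
have n0 : (0 < n)%N by apply/card_gt0P; exists 0.
have h0 : (0 < h)%N by rewrite lt0n; apply: contraTneq n0 => Eh; rewrite -hE Eh.
have hn : (h < n)%N by rewrite -hE -{1}(muln1 h) ltn_pmul2l.
have wts v : v \in C -> wt v \in [:: 0%N; h; n].
  rewrite inE => /existsP[a /existsP[c /eqP ->]].
  have [->|an] := eqVneq a 0.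
    rewrite wt_const; case: (F2_cases c) => ->; rewrite ?wt_c0 ?wt_c1 !inE eqxx ?orbT //.
  have := wt_bal c an; move=> E.
  have -> : wt (affine_eval a c) = h by apply/eqP; rewrite -(eqn_pmul2r (isT : (0 < 2)%N)) E hE.
  by rewrite !inE eqxx orbT.
have Anz i v : v \in C -> wt v = i -> A_coeff C i != 0%N.
  move=> vC wi; rewrite -lt0n card_gt0; apply/set0Pn; exists v.
  by rewrite inE vC wi eqxx.
have A0 : A_coeff C 0 != 0%N by apply: (Anz _ (affine_eval 0 0)); rewrite ?inRM // wt_const wt_c0.
have Ah : A_coeff C h != 0%N by apply: (Anz _ (affine_eval a1 0)); rewrite ?inRM.
have An : A_coeff C n != 0%N by apply: (Anz _ (affine_eval 0 1)); rewrite ?inRM // wt_const wt_c1.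
have A0le : (A_coeff C 0 <= 1)%N.
  apply: (@leq_trans #|[set (0 : {ffun 'rV['F_2]_m -> 'F_2})]|); last by rewrite cards1.
  apply: subset_leq_card.
  by apply/subsetP => v; rewrite !inE => /andP[_ /eqP/wt0 ->].
have Anle : (A_coeff C n <= 1)%N.
  apply: (@leq_trans #|[set ([ffun=> 1] : {ffun 'rV['F_2]_m -> 'F_2})]|); last by rewrite cards1.
  apply: subset_leq_card.
  by apply/subsetP => v; rewrite !inE => /andP[_ /eqP/wtT ->].
rewrite /log_concave /nz_weight_distribution.
rewrite (@filter3 (A_coeff C) h n) ?h0 ?hn //; last first.
  move=> i Hi; apply/eqP; rewrite cards_eq0; apply/eqP/setP => v; rewrite in_set0 inE.
  apply/negbTE; apply/negP => /andP[vC /eqP wi].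
  by move: (wts v vC); rewrite wi (negbTE Hi).
move=> i i1 /= i2.
have -> : i = 1%N by apply/eqP; rewrite eqn_leq i1 i2.
rewrite /=.
apply: (leq_trans (leq_mul A0le Anle)).
by rewrite expn_gt0 lt0n Ah.
Qed.
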